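(* Let $R$ be a finitely generated $\mathbb{C}$-algebra which is an integral domain. Then $R$ is rigid if and only if $R[X,Y]/(XY)$ (with $X,Y$ indeterminates over $R$) is rigid.
   Context: A derivation of a $\mathbb{C}$-algebra $A$ is a $\mathbb{C}$-linear map $D:A\to A$ satisfying the Leibniz rule; it is locally nilpotent (an LND) if for every $a\in A$ there is $n$ with $D^n(a)=0$. A ring is rigid if its only locally nilpotent derivation is the zero derivation. *)

(* Defs.v *)
From HB Require Import structures.
From mathcomp Require Import all_boot all_order all_algebra.
From mathcomp Require Import generic_quotient ring_quotient.
From Stdlib Require Import ClassicalEpsilon.
Set Implicit Arguments. Unset Strict Implicit. Unset Printing Implicit Defensive.
Import GRing.Theory Num.Theory.
Local Open Scope quotient_scope.
Local Open Scope ring_scope.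

Section Derivations.
Variables (C : fieldType) (A : comNzRingType) (phi : C -> A).

Definition is_Cderivation (D : A -> A) : Prop :=
  [/\ forall x y, D (x + y) = D x + D y,
      forall (c : C) x, D (phi c * x) = phi c * D x
    & forall x y, D (x * y) = x * D y + D x * y].

Definition locally_nilpotent (D : A -> A) : Prop :=
  forall a, exists n : nat, iter n D a = 0.

Definition rigid : Prop :=
  forall D : A -> A, is_Cderivation D -> locally_nilpotent D -> forall a, D a = 0.

Inductive in_subalg (s : seq A) : A -> Prop :=
  | sub_scalar (c : C) : in_subalg s (phi c)
  | sub_gen x : x \in s -> in_subalg s x
  | sub_add x y : in_subalg s x -> in_subalg s y -> in_subalg s (x + y)
  | sub_mul x y : in_subalg s x -> in_subalg s y -> in_subalg s (x * y).

Definition fin_gen_alg : Prop := exists s : seq A, forall a, in_subalg s a.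

End Derivations.

(** The ring R[X,Y]/(XY): R[X,Y] is {poly {poly R}}, with X the outer
    variable 'X and Y the inner variable ('X)%:P. *)
Section QuotXY.
Variable R : idomainType.

Definition XYpoly : {poly {poly R}} := 'X * ('X)%:P.

Definition XYideal : pred {poly {poly R}} :=
  fun p => if excluded_middle_informative (exists q, p = q * XYpoly)
           then true else false.

Lemma XYidealP p : reflect (exists q, p = q * XYpoly) (p \in XYideal).
Proof.
rewrite unfold_in /XYideal.
by case: excluded_middle_informative => h; constructor.
Qed.

Lemma size_XYpoly : size XYpoly = 2%N.
Proof.
rewrite /XYpoly mulrC size_mul ?polyX_eq0 ?polyC_eq0 ?polyX_eq0 //.
by rewrite size_polyX size_polyC polyX_eq0.
Qed.

Lemma XYideal_closed : idealr_closed XYideal.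
Proof.
split.
- by apply/XYidealP; exists 0; rewrite mul0r.
- apply/XYidealP => -[q hq].
  have : size (1 : {poly {poly R}}) = size (q * XYpoly) by rewrite -hq.
  rewrite size_poly1.
  have [->|qn0] := eqVneq q 0; first by rewrite mul0r size_poly0.
  rewrite size_mul // ?size_XYpoly; last by rewrite -size_poly_eq0 size_XYpoly.
  rewrite addn2 /= => -[] /eqP; rewrite eq_sym size_poly_eq0.
  by rewrite (negPf qn0).
- move=> a u v /XYidealP[qu ->] /XYidealP[qv ->].
  by apply/XYidealP; exists (a * qu + qv); rewrite mulrDl mulrA.
Qed.

HB.instance Definition _ := isIdealr.Build {poly {poly R}} XYideal XYideal_closed.

Definition XYidealr : idealr {poly {poly R}} := Idealr.clone _ XYideal _.
Definition RXY : comNzRingType := {ideal_quot XYidealr}.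

Definition RXY_map (C : fieldType) (f : {rmorphism C -> R}) (c : C) : RXY :=
  \pi_RXY ((f c)%:P%:P).

End QuotXY.

(* Main.v *)
Require Import Defs.
From HB Require Import structures.
From mathcomp Require Import all_boot all_order all_algebra.
From mathcomp Require Import generic_quotient ring_quotient.
Import GRing.Theory Num.Theory.
Local Open Scope ring_scope.
Local Open Scope quotient_scope.

Section Gen.
Variables (A : comNzRingType) (D : A -> A).
Hypothesis DD : forall x y, D (x + y) = D x + D y.
Hypothesis DM : forall x y, D (x * y) = x * D y + D x * y.

Lemma D0 : D 0 = 0.
Proof. by apply: (addrI (D 0)); rewrite addr0 -DD addr0. Qed.

Lemma DN x : D (- x) = - D x.
Proof. by apply: (addrI (D x)); rewrite -DD !subrr D0. Qed.

Lemma DB x y : D (x - y) = D x - D y.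
Proof. by rewrite DD DN. Qed.

Lemma D1 : D 1 = 0.
Proof.
have := DM 1 1; rewrite !mul1r mulr1 => h.
apply: (addrI (D 1)). rewrite addr0. by rewrite -h.
Qed.

Lemma iterD0 n : iter n D 0 = 0.
Proof. by elim: n => //= n ->; exact: D0. Qed.

Lemma iterDD n x y : iter n D (x + y) = iter n D x + iter n D y.
Proof. by elim: n => //= n ->; rewrite DD. Qed.

Lemma iterDS n x : iter n.+1 D x = iter n D (D x).
Proof. exact: iterSr. Qed.

Lemma iterD_ge m n x : iter m D x = 0 -> (m <= n)%N -> iter n D x = 0.
Proof.
move=> h /subnK <-; by rewrite iterD h iterD0.
Qed.

Lemma leib_top n : forall m k a b, (m + k)%N = n ->
  iter m.+1 D a = 0 -> iter k.+1 D b = 0 ->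
  iter n D (a * b) = 'C(n, m)%:R * (iter m D a * iter k D b).
Proof.
elim: n => [|n IH] m k a b.
  move=> /eqP; rewrite addn_eq0 => /andP[/eqP-> /eqP->] _ _ /=.
  by rewrite bin0 mul1r.
move=> hmk ha hb; rewrite iterDS DM iterDD.
have T1 : iter n D (a * D b) = if k is k'.+1 then 'C(n, m)%:R * (iter m D a * iter k D b) else 0.
  case: k hmk hb => [|k'] hmk hb.
    by move: hb => /= ->; rewrite mulr0 iterD0.
  rewrite (IH m k') //; first by rewrite -iterDS.
    by move: hmk; rewrite addnS => -[].
  by rewrite -iterDS.
have T2 : iter n D (D a * b) = if m is m'.+1 then 'C(n, m')%:R * (iter m D a * iter k D b) else 0.
  case: m hmk ha {T1} => [|m'] hmk ha.
    by move: ha => /= ->; rewrite mul0r iterD0.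
  rewrite (IH m' k) //; first by rewrite iterDS.
    by move: hmk; rewrite addSn => -[].
  by rewrite -iterDS.
rewrite T1 T2.
case: m k hmk ha hb T1 T2 => [|m'] [|k'] //= hmk ha hb _ _.
- by rewrite addr0 !bin0.
- move: hmk; rewrite addn0 => -[->]; by rewrite add0r !binn.
- by rewrite binS natrD mulrDl addrC.
Qed.

Lemma deg_exists a n : iter n D a = 0 -> a != 0 ->
  exists m, iter m D a != 0 /\ iter m.+1 D a = 0.
Proof.
elim: n => [|n IH] /=; first by move=> ->; rewrite eqxx.
case: (eqVneq (iter n D a) 0) => [h _|h ha]; first exact: IH.
by exists n.
Qed.
End Gen.

Lemma lnd_div (A : idomainType) (D : A -> A)
  (DD : forall x y, D (x + y) = D x + D y)
  (DM : forall x y, D (x * y) = x * D y + D x * y)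
  (LND : forall a, exists n, iter n D a = 0)
  (Hc : forall k, (0 < k)%N -> (k%:R : A) != 0) a g :
  D a = a * g -> D a = 0.
Proof.
move=> hag; apply/eqP/negPn/negP => hDa.
have a0 : a != 0 by apply: contraNneq hDa => a0; rewrite hag a0 mul0r.
have g0 : g != 0 by apply: contraNneq hDa => g0; rewrite hag g0 mulr0.
have [na hna] := LND a; have [ng hng] := LND g.
have [m [hm1 hm2]] := @deg_exists A D _ _ hna a0.
have [k [hk1 hk2]] := @deg_exists A D _ _ hng g0.
have := @leib_top A D DD DM _ _ _ _ _ (erefl (m + k)%N) hm2 hk2.
rewrite -hag -iterDS (@iterD_ge A D DD _ _ _ hm2); last by rewrite ltnS leq_addr.
move/esym/eqP; rewrite !mulf_eq0 (negPf hm1) (negPf hk1) /= !orbF.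
by apply/negP; apply: Hc; rewrite bin_gt0 leq_addr.
Qed.


Section Side.
Variables (C : numClosedFieldType) (R : idomainType) (f : {rmorphism C -> R}).

Lemma natr_polyR_neq0 k : (0 < k)%N -> (k%:R : {poly R}) != 0.
Proof.
move=> k0; rewrite -polyC_natr polyC_eq0 -(rmorph_nat f) fmorph_eq0.
by rewrite pnatr_eq0 -lt0n.
Qed.

Lemma poly_roots_f (q : {poly R}) : (forall c, q.[f c] = 0) -> q = 0.
Proof.
move=> h; apply/eqP/negPn/negP => q0.
pose s := [seq (i%:R : C) | i <- iota 0 (size q)].
have H1 : all (root q) [seq f i | i <- s].
  by apply/allP => x /mapP[c _ ->]; apply/eqP; exact: h.
have H2 : uniq s.
  rewrite map_inj_uniq ?iota_uniq // => i j /eqP; rewrite eqr_nat => /eqP.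
  by [].
have := max_ring_poly_roots q0 H1.
by rewrite map_uniq_roots H2 size_map size_map size_iota ltnn; move=> /(_ isT).
Qed.

Hypothesis Rrig : rigid f.
Variables (B : comNzRingType) (phiB : C -> B) (D : B -> B).
Hypothesis HD : is_Cderivation phiB D.
Hypothesis HL : locally_nilpotent D.
Variables (p : B -> {poly R}) (s : {poly R} -> B) (u v : B).
Hypothesis pD : forall a b, p (a + b) = p a + p b.
Hypothesis pM : forall a b, p (a * b) = p a * p b.
Hypothesis ps : forall q, p (s q) = q.
Hypothesis pphi : forall c, p (phiB c) = (f c)%:P.
Hypothesis pv : p v = 0.
Hypothesis kerp : forall b, p b = 0 -> exists c, b = v * c.
Hypothesis pDv : p (D v) = 0.
Hypothesis pu : p u = 'X.
Hypothesis Du : exists c, D u = u * c.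

Let DD : forall x y, D (x + y) = D x + D y. Proof. by case: HD. Qed.
Let DC : forall c x, D (phiB c * x) = phiB c * D x. Proof. by case: HD. Qed.
Let DM : forall x y, D (x * y) = x * D y + D x * y. Proof. by case: HD. Qed.

Let p0 : p 0 = 0.
Proof. by apply: (addrI (p 0)); rewrite -pD !addr0. Qed.
Let pN x : p (- x) = - p x.
Proof. by apply: (addrI (p x)); rewrite -pD !subrr p0. Qed.

Definition Db q := p (D (s q)).

Lemma Db_comm b : Db (p b) = p (D b).
Proof.
have hk : p (s (p b) - b) = 0 by rewrite pD pN ps subrr.
rewrite /Db; have [c hc] := kerp _ hk.
have -> : s (p b) = b + v * c by rewrite -hc addrC subrK.
by rewrite DD DM !pD !pM pv pDv !mul0r !addr0.
Qed.

Lemma Db_der : is_Cderivation (fun c => (f c)%:P) Db.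
Proof.
split.
- move=> x y; rewrite -{1}(ps x) -{1}(ps y) -pD Db_comm DD pD //.
- move=> c x; rewrite -{1}(ps x) -pphi -pM Db_comm DC pM pphi //.
- move=> x y; rewrite -{1}(ps x) -{1}(ps y) -pM Db_comm DM !pD !pM !ps //.
Qed.

Lemma Db_iter n b : iter n Db (p b) = p (iter n D b).
Proof. by elim: n => //= n ->; rewrite Db_comm. Qed.

Lemma Db_lnd : locally_nilpotent Db.
Proof.
move=> q; have [n hn] := HL (s q); exists n.
by rewrite -(ps q) Db_iter hn p0.
Qed.

Lemma side_u : p (D u) = 0.
Proof.
have [DbD _ DbM] := Db_der.
have [c hc] := Du.
rewrite -Db_comm pu; apply: (@lnd_div _ _ DbD DbM Db_lnd natr_polyR_neq0 'X (p c)).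
by rewrite -{1}pu Db_comm hc pM pu.
Qed.

Lemma side_r r : p (D (s r%:P)) = 0.
Proof.
have [DbD DbC DbM] := Db_der.
have DbX : Db 'X = 0 by rewrite -pu Db_comm side_u.
have DbN := @DN _ _ DbD.
have Db1 := @D1 _ _ DbM.
suff : Db r%:P = 0 by [].
apply: poly_roots_f => c.
pose a := f c.
pose del := fun r : R => (Db r%:P).[a].
have comm q : (Db q).[a] = del q.[a].
  have /factor_theorem [h hh] : root (q - (q.[a])%:P) a.
    by rewrite /root hornerD hornerN hornerC subrr.
  have -> : q = (q.[a])%:P + h * ('X - a%:P) by rewrite -hh addrC subrK.
  rewrite DbD DbM DbD DbN DbX.
  have -> : Db a%:P = 0 by rewrite -[a%:P]mulr1 DbC Db1 mulr0.
  by rewrite /del subr0 mulr0 add0r !hornerE subrr !mulr0 !addr0.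
have hdel : is_Cderivation f del.
  split.
  - by move=> x y; rewrite /del polyCD DbD hornerD.
  - by move=> c' x; rewrite /del polyCM DbC hornerCM.
  - by move=> x y; rewrite /del polyCM DbM hornerD hornerCM hornerM hornerC.
have hldel : locally_nilpotent del.
  move=> x; have [n hn] := Db_lnd x%:P; exists n.
  suff -> : iter n del x = (iter n Db x%:P).[a] by rewrite hn horner0.
  elim: n {hn} => [|n IH] /=; first by rewrite hornerC.
  by rewrite comm IH.
exact: Rrig hdel hldel r.
Qed.
End Side.


Section Concrete.
Variable R : idomainType.
Notation B := (RXY R).
Notation PP := {poly {poly R}}.
Notation I := (@XYideal R).

Lemma pi_eq (a b : PP) : a - b \in I -> \pi_B a = \pi_B b.
Proof. by move=> h; apply/eqP; rewrite -Quotient.idealrBE. Qed.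

Lemma pi_eq0 (a : PP) : \pi_B a = 0 -> a \in I.
Proof.
move=> h; have : (a == 0 %[mod B]) by rewrite h -(rmorph0 \pi_B).
by rewrite -Quotient.idealrBE subr0.
Qed.

Lemma pi_repr (b : B) : \pi_B (repr b) = b.
Proof. exact: reprK. Qed.

Lemma XY_in : XYpoly R \in I.
Proof. by apply/XYidealP; exists 1; rewrite mul1r. Qed.

Definition gX (q : PP) : {poly R} := map_poly (horner_eval (0 : R)) q.
Definition gY (q : PP) : {poly R} := q.[0].

Lemma gXD a b : gX (a + b) = gX a + gX b. Proof. by rewrite /gX rmorphD. Qed.
Lemma gXM a b : gX (a * b) = gX a * gX b. Proof. by rewrite /gX rmorphM. Qed.
Lemma gYD a b : gY (a + b) = gY a + gY b. Proof. by rewrite /gY hornerD. Qed.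
Lemma gYM a b : gY (a * b) = gY a * gY b. Proof. by rewrite /gY hornerM. Qed.
Lemma gXN a : gX (- a) = - gX a. Proof. by rewrite /gX rmorphN. Qed.
Lemma gYN a : gY (- a) = - gY a. Proof. by rewrite /gY hornerN. Qed.

Lemma gX_I q : q \in I -> gX q = 0.
Proof.
move=> /XYidealP[h ->]; rewrite gXM /XYpoly gXM /gX map_polyC /= horner_evalE hornerX.
by rewrite !mulr0.
Qed.
Lemma gY_I q : q \in I -> gY q = 0.
Proof. by move=> /XYidealP[h ->]; rewrite gYM /XYpoly gYM /gY hornerX !mul0r mulr0. Qed.

Definition pX (b : B) := gX (repr b).
Definition pY (b : B) := gY (repr b).

Lemma pX_pi q : pX (\pi_B q) = gX q.
Proof.
have : repr (\pi_B q) - q \in I.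
  by rewrite Quotient.idealrBE reprK.
by move/gX_I; rewrite gXD gXN => /eqP; rewrite subr_eq0 => /eqP.
Qed.
Lemma pY_pi q : pY (\pi_B q) = gY q.
Proof.
have : repr (\pi_B q) - q \in I.
  by rewrite Quotient.idealrBE reprK.
by move/gY_I; rewrite gYD gYN => /eqP; rewrite subr_eq0 => /eqP.
Qed.

Lemma pXD a b : pX (a + b) = pX a + pX b.
Proof. by rewrite -(pi_repr a) -(pi_repr b) -rmorphD !pX_pi gXD. Qed.
Lemma pXM a b : pX (a * b) = pX a * pX b.
Proof. by rewrite -(pi_repr a) -(pi_repr b) -rmorphM !pX_pi gXM. Qed.
Lemma pYD a b : pY (a + b) = pY a + pY b.
Proof. by rewrite -(pi_repr a) -(pi_repr b) -rmorphD !pY_pi gYD. Qed.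
Lemma pYM a b : pY (a * b) = pY a * pY b.
Proof. by rewrite -(pi_repr a) -(pi_repr b) -rmorphM !pY_pi gYM. Qed.

Definition sX (q : {poly R}) : B := \pi_B (map_poly polyC q).
Definition sY (q : {poly R}) : B := \pi_B (q%:P).
Definition xB : B := \pi_B 'X.
Definition yB : B := \pi_B ('X%:P).

Lemma pX_sX q : pX (sX q) = q.
Proof.
rewrite /sX pX_pi /gX -map_poly_comp_id0; last by rewrite horner_evalE horner0.
by rewrite (eq_map_poly (g := id)) ?map_poly_id // => z /=; rewrite horner_evalE hornerC.
Qed.
Lemma pY_sY q : pY (sY q) = q.
Proof. by rewrite /sY pY_pi /gY hornerC. Qed.
Lemma pX_x : pX xB = 'X.
Proof. by rewrite /xB pX_pi /gX map_polyX. Qed.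
Lemma pX_y : pX yB = 0.
Proof. by rewrite /yB pX_pi /gX map_polyC /= horner_evalE hornerX. Qed.
Lemma pY_x : pY xB = 0.
Proof. by rewrite /xB pY_pi /gY hornerX. Qed.
Lemma pY_y : pY yB = 'X.
Proof. by rewrite /yB pY_pi /gY hornerC. Qed.

Lemma xy0 : xB * yB = 0.
Proof. by rewrite /xB /yB -rmorphM -(rmorph0 \pi_B); apply: pi_eq; rewrite subr0 XY_in. Qed.

Lemma kerX b : pX b = 0 -> exists c, b = yB * c.
Proof.
rewrite -{2}(pi_repr b) /pX; move: (repr b) => q h.
exists (\pi_B (map_poly (drop_poly 1) q)); rewrite /yB -rmorphM mulrC; congr (\pi_B _).
apply/polyP => i; rewrite coefMC coef_map_id0; last first.
  by apply/polyP => j; rewrite coef_drop_poly !coef0.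
have hi : (q`_i).[0] = 0.
  have := congr1 (fun p : {poly R} => p`_i) h.
  by rewrite /gX /= coef_map_id0 ?horner_evalE ?horner0 // coef0.
rewrite -{1}(poly_take_drop 1 (q`_i)) expr1.
suff -> : take_poly 1 q`_i = 0 by rewrite add0r.
apply/polyP => j; rewrite coef_take_poly coef0; case: j => // .
by rewrite -horner_coef0 hi.
Qed.

Lemma kerY b : pY b = 0 -> exists c, b = xB * c.
Proof.
rewrite -{2}(pi_repr b) /pY; move: (repr b) => q h.
exists (\pi_B (drop_poly 1 q)); rewrite /xB -rmorphM mulrC; congr (\pi_B _).
rewrite -{1}(poly_take_drop 1 q) expr1.
suff -> : take_poly 1 q = 0 by rewrite add0r.
apply/polyP => j; rewrite coef_take_poly coef0; case: j => //.
by move: h; rewrite /gY horner_coef0 => ->.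
Qed.

Lemma pXY_inj b : pX b = 0 -> pY b = 0 -> b = 0.
Proof.
move=> /kerX[c ->]; rewrite pYM pY_y => /eqP; rewrite mulf_eq0 polyX_eq0 /= => /eqP.
by move=> /kerY[c' ->]; rewrite mulrA [yB * _]mulrC xy0 mul0r.
Qed.

Lemma pX_phi (C : fieldType) (f : {rmorphism C -> R}) c : pX (RXY_map f c) = (f c)%:P.
Proof. by rewrite /RXY_map pX_pi /gX map_polyC /= horner_evalE hornerC. Qed.
Lemma pY_phi (C : fieldType) (f : {rmorphism C -> R}) c : pY (RXY_map f c) = (f c)%:P.
Proof. by rewrite /RXY_map pY_pi /gY hornerC. Qed.

End Concrete.


Section PolyDer.
Variables (A : comNzRingType) (d : A -> A).
Hypothesis dD : forall x y, d (x + y) = d x + d y.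
Hypothesis dM : forall x y, d (x * y) = x * d y + d x * y.
Let d0 : d 0 = 0 := @D0 A d dD.
Let d1 : d 1 = 0 := @D1 A d dM.

Definition Dp (q : {poly A}) := map_poly d q.

Lemma Dp0 : Dp 0 = 0.
Proof. by rewrite /Dp map_poly0. Qed.
Lemma DpD p q : Dp (p + q) = Dp p + Dp q.
Proof. by apply/polyP => i; rewrite /Dp coefD !coef_map_id0 // coefD dD. Qed.
Lemma DpC c : Dp c%:P = (d c)%:P.
Proof. by apply/polyP => i; rewrite /Dp coef_map_id0 // !coefC; case: (i == 0%N). Qed.
Lemma DpCM c q : Dp (c%:P * q) = c%:P * Dp q + (d c)%:P * q.
Proof. by apply/polyP => i; rewrite /Dp coefD !coefCM !coef_map_id0 // coefCM dM. Qed.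
Lemma DpMX q : Dp (q * 'X) = Dp q * 'X.
Proof. by apply/polyP => i; rewrite /Dp coef_map_id0 // !coefMX; case: (i == 0%N); rewrite ?coef_map_id0. Qed.
Lemma DpX : Dp 'X = 0.
Proof. by apply/polyP => i; rewrite /Dp coef_map_id0 // coefX coef0; case: (i == 1%N). Qed.

Lemma DpM p q : Dp (p * q) = p * Dp q + Dp p * q.
Proof.
elim/poly_ind: p => [|p c IH]; first by rewrite mul0r Dp0 !mul0r addr0.
rewrite mulrDl DpD -mulrA [_ * q]mulrC mulrA DpMX IH DpCM DpD DpMX DpC.
rewrite !mulrDl !addrA; congr (_ + _).
rewrite [p * 'X * _]mulrAC [Dp p * 'X * q]mulrAC -!addrA; congr (_ + _).
by rewrite addrC.
Qed.

Lemma iterDp_MX n q : iter n Dp (q * 'X) = iter n Dp q * 'X.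
Proof. by elim: n => //= n ->; rewrite DpMX. Qed.
Lemma iterDp_C n c : iter n Dp c%:P = (iter n d c)%:P.
Proof. by elim: n => //= n ->; rewrite DpC. Qed.

Lemma Dp_lnd : (forall a, exists n, iter n d a = 0) -> forall q, exists n, iter n Dp q = 0.
Proof.
move=> hl; elim/poly_ind => [|q c [n1 h1]]; first by exists 0%N.
have [n2 h2] := hl c; exists (maxn n1 n2).
rewrite (@iterDD _ _ DpD) iterDp_MX iterDp_C.
rewrite (@iterD_ge _ _ DpD _ _ _ h1 (leq_maxl _ _)).
by rewrite (@iterD_ge _ _ dD _ _ _ h2 (leq_maxr _ _)) mul0r add0r.
Qed.
End PolyDer.

Section Back.
Variables (C : numClosedFieldType) (R : idomainType) (f : {rmorphism C -> R}).
Variable del : R -> R.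
Hypothesis Hdel : is_Cderivation f del.
Hypothesis Ldel : locally_nilpotent del.
Notation B := (RXY R).
Notation I := (@XYideal R).

Let dD : forall x y, del (x + y) = del x + del y. Proof. by case: Hdel. Qed.
Let dC : forall c x, del (f c * x) = f c * del x. Proof. by case: Hdel. Qed.
Let dM : forall x y, del (x * y) = x * del y + del x * y. Proof. by case: Hdel. Qed.
Let D1D := @DpD R del dD.
Let D1M := @DpM R del dD dM.
Definition D2 := @Dp {poly R} (@Dp R del).
Let D2D := @DpD {poly R} _ D1D.
Let D2M := @DpM {poly R} _ D1D D1M.

Lemma D2_I q : q \in I -> D2 q \in I.
Proof.
move=> /XYidealP[h ->]; apply/XYidealP; exists (D2 h).
rewrite /D2 D2M /XYpoly D2M (@DpC _ _ D1D) (@DpX _ _ dD dM) (@DpX _ _ D1D D1M).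
by rewrite mul0r addr0 polyC0 !mulr0 add0r.
Qed.

Definition DBq (b : B) : B := \pi_B (D2 (repr b)).

Lemma DBq_pi q : DBq (\pi_B q) = \pi_B (D2 q).
Proof.
have hI : repr (\pi_B q) - q \in I by rewrite Quotient.idealrBE reprK.
apply: pi_eq; have := D2_I _ hI.
by rewrite /D2 D2D (@DN _ _ D2D).
Qed.

Lemma dphi c : del (f c) = 0.
Proof. by rewrite -[f c]mulr1 dC (@D1 _ _ dM) mulr0. Qed.

Lemma DBq_der : is_Cderivation (RXY_map f) DBq.
Proof.
split.
- by move=> a b; rewrite -(@pi_repr R a) -(@pi_repr R b) -rmorphD !DBq_pi /D2 D2D rmorphD.
- move=> c a; rewrite -(@pi_repr R a) /RXY_map -rmorphM !DBq_pi.
  rewrite /D2 (@DpCM _ _ D1D D1M) (@DpC _ _ dD) dphi.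
  have -> : ((0 : R)%:P)%:P = 0 :> {poly {poly R}} by rewrite !polyC0.
  by rewrite mul0r addr0 rmorphM.
- by move=> a b; rewrite -(@pi_repr R a) -(@pi_repr R b) -rmorphM !DBq_pi /D2 D2M rmorphD !rmorphM.
Qed.

Lemma DBq_lnd : locally_nilpotent DBq.
Proof.
move=> b; rewrite -(@pi_repr R b); move: (repr b) => q.
have [n hn] := @Dp_lnd _ _ D1D (@Dp_lnd _ _ dD Ldel) q.
exists n; suff -> : iter n DBq (\pi_B q) = \pi_B (iter n D2 q) by rewrite /D2 hn rmorph0.
by elim: n {hn} => //= n ->; rewrite DBq_pi.
Qed.

Lemma back_zero : rigid (RXY_map f) -> forall r, del r = 0.
Proof.
move=> rig r.
have := rig DBq DBq_der DBq_lnd (\pi_B ((r%:P)%:P)).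
rewrite DBq_pi /D2 (@DpC _ _ D1D) (@DpC _ _ dD) => /(congr1 (@pX R)).
rewrite pX_pi -(rmorph0 \pi_B) pX_pi /gX map_polyC /= horner_evalE hornerC.
by rewrite map_poly0 => /eqP; rewrite polyC_eq0 => /eqP.
Qed.
End Back.


Lemma forward (C : numClosedFieldType) (R : idomainType) (f : {rmorphism C -> R}) :
  rigid f -> rigid (RXY_map f).
Proof.
move=> rig D HD HL.
have [DD DC DM] := HD.
have pX0 : pX R 0 = 0 by rewrite -(rmorph0 \pi_(RXY R)) pX_pi /gX map_poly0.
have pY0 : pY R 0 = 0 by rewrite -(rmorph0 \pi_(RXY R)) pY_pi /gY horner0.
have h0 : D (xB R) * yB R + xB R * D (yB R) = 0.
  by rewrite addrC -DM xy0 (@D0 _ _ DD).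
have pYDx : pY R (D (xB R)) = 0.
  move: (congr1 (@pY R) h0); rewrite pYD !pYM pY_x pY_y pY0 mul0r addr0.
  by move/eqP; rewrite mulf_eq0 polyX_eq0 orbF => /eqP.
have pXDy : pX R (D (yB R)) = 0.
  move: (congr1 (@pX R) h0); rewrite pXD !pXM pX_x pX_y pX0 mulr0 add0r.
  by move/eqP; rewrite mulf_eq0 polyX_eq0 /= => /eqP.
have Dux := @kerY R _ pYDx.
have pXDx : pX R (D (xB R)) = 0.
  exact: (@side_u C R f _ _ _ HD HL _ _ _ _ (@pXD R) (@pXM R) (@pX_sX R) (@pX_phi R C f) (@pX_y R) (@kerX R) pXDy (@pX_x R) Dux).
have pYDy : pY R (D (yB R)) = 0.
  exact: (@side_u C R f _ _ _ HD HL _ _ _ _ (@pYD R) (@pYM R) (@pY_sY R) (@pY_phi R C f) (@pY_x R) (@kerY R) pYDx (@pY_y R) (@kerX R _ pXDy)).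
have Dx0 : D (xB R) = 0 by apply: pXY_inj.
have Dy0 : D (yB R) = 0 by apply: pXY_inj.
have Dr0 r : D (\pi_(RXY R) ((r%:P)%:P)) = 0.
  apply: pXY_inj.
    have := @side_r C R f rig _ _ _ HD HL _ _ _ _ (@pXD R) (@pXM R) (@pX_sX R) (@pX_phi R C f) (@pX_y R) (@kerX R) pXDy (@pX_x R) (@kerY R _ pYDx) r.
    by rewrite /sX map_polyC.
  exact: (@side_r C R f rig _ _ _ HD HL _ _ _ _ (@pYD R) (@pYM R) (@pY_sY R) (@pY_phi R C f) (@pY_x R) (@kerY R) pYDx (@pY_y R) (@kerX R _ pXDy) r).
have D0' := @D0 _ _ DD.
have Dinner (c : {poly R}) : D (\pi_(RXY R) c%:P) = 0.
  elim/poly_ind: c => [|c r IH]; first by rewrite polyC0 rmorph0.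
  rewrite polyCD polyCM rmorphD rmorphM DD DM IH Dr0.
  by rewrite -/(yB R) Dy0 mulr0 mul0r !addr0.
move=> b; rewrite -(@pi_repr R b); move: (repr b) => q.
elim/poly_ind: q => [|q c IH]; first by rewrite rmorph0.
rewrite rmorphD rmorphM DD DM IH Dinner -/(xB R) Dx0.
by rewrite mulr0 mul0r !addr0.
Qed.

Theorem lemma2p4 (C : numClosedFieldType) (R : idomainType)
    (f : {rmorphism C -> R}) :
  fin_gen_alg f ->
  (rigid f <-> rigid (RXY_map f)).
Proof.
move=> _; split; first exact: forward.
move=> rig del Hdel Ldel r; exact: (@back_zero C R f del Hdel Ldel rig r).
Qed.
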